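(* For every contractor network, the matrix $\mathbf I-\mathbf A\mathbf W$ is invertible and the Neumann series $\sum_{t=0}^\infty(\mathbf A\mathbf W)^t$ converges to $(\mathbf I-\mathbf A\mathbf W)^{-1}$.
   Context: A contractor network is a finite directed graph $G=(\mathcal V,\mathcal E)$ with $n=|\mathcal V|$ nodes, without multiple edges (self-loops and directed cycles are allowed), in which every node has at least one incident edge. For $i\in\mathcal V$ let $\delta_{\mathrm{in}}(i)=\{j:(j,i)\in\mathcal E\}$ and $\delta_{\mathrm{out}}(i)=\{k:(i,k)\in\mathcal E\}$. A node $i$ is a pure principal if $\delta_{\mathrm{in}}(i)=\emptyset$, a pure obligee if $\delta_{\mathrm{out}}(i)=\emptyset$, and an intermediary otherwise. Each edge $(j,i)\in\mathcal E$ carries a weight $w_{ij}>0$; set $w_{ij}=0$ if $(j,i)\notin\mathcal E$; for every node $i$ with $\delta_{\mathrm{in}}(i)\neq\emptyset$ we have $\sum_{j\in\delta_{\mathrm{in}}(i)}w_{ij}=1$. Let $\mathbf W=(w_{ij})_{i,j\in\mathcal V}$. Each node has a propagation parameter $\alpha_i$, with $\alpha_i=0$ for pure principals, $\alpha_i=1$ for pure obligees, and $\alpha_i\in(0,1)$ for intermediaries; $\mathbf A=\mathrm{diag}(\alpha_i)_{i\in\mathcal V}$. *)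

(* Defs.v *)
From HB Require Import structures.
From mathcomp Require Import all_boot all_order all_algebra.
From mathcomp Require Import all_classical all_reals all_analysis.
Set Implicit Arguments. Unset Strict Implicit. Unset Printing Implicit Defensive.
Import Order.TTheory GRing.Theory Num.Theory.
Local Open Scope ring_scope.

(* A contractor network on the node set 'I_n:
   E j i  means  (j, i) is a directed edge  (edge relation; no multi-edges by
   construction, self-loops and cycles allowed).
   w : 'M[R]_n with  w i j = w_{ij}  the weight of edge (j,i).
   alpha : propagation parameters. *)

Definition in_nbrs n (E : rel 'I_n) (i : 'I_n) : {set 'I_n} := [set j | E j i].
Definition out_nbrs n (E : rel 'I_n) (i : 'I_n) : {set 'I_n} := [set k | E i k].

Definition pure_principal n (E : rel 'I_n) i := in_nbrs E i == finset.set0.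
Definition pure_obligee n (E : rel 'I_n) i := out_nbrs E i == finset.set0.
Definition intermediary n (E : rel 'I_n) i :=
  ~~ pure_principal E i && ~~ pure_obligee E i.

Definition contractor_network (R : realType) n (E : rel 'I_n)
    (w : 'M[R]_n) (alpha : 'I_n -> R) : Prop :=
  (forall i : 'I_n, exists k : 'I_n, E i k || E k i) /\
  (forall i j : 'I_n, E j i -> 0 < w i j) /\
  (forall i j : 'I_n, ~~ E j i -> w i j = 0) /\
  (forall i : 'I_n, in_nbrs E i != finset.set0 ->
     \sum_(j in in_nbrs E i) w i j = 1) /\
  (forall i : 'I_n, pure_principal E i -> alpha i = 0) /\
  (forall i : 'I_n, pure_obligee E i -> alpha i = 1) /\
  (forall i : 'I_n, intermediary E i -> 0 < alpha i < 1).

Definition Amx (R : realType) n (alpha : 'I_n -> R) : 'M[R]_n :=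
  diag_mx (\row_i alpha i).

(* Main.v *)
Require Import Defs.
From HB Require Import structures.
From mathcomp Require Import all_boot all_order all_algebra.
From mathcomp Require Import all_classical all_reals all_analysis.
Import Order.TTheory GRing.Theory Num.Theory.
Import numFieldNormedType.Exports.
Local Open Scope classical_set_scope.
Local Open Scope ring_scope.

Lemma entry_le_norm (R : realType) m n (x : 'M[R]_(m, n)) i j : `|x i j| <= `|x|.
Proof.
rewrite [leRHS]/Num.Def.normr /= mx_normrE; apply/bigmax_geP; right => /=.
by exists (i, j).
Qed.

Lemma norm_le_entries (R : realType) m n (x : 'M[R]_(m, n)) e :
  0 <= e -> (forall i j, `|x i j| <= e) -> `|x| <= e.
Proof.
move=> e0 H; rewrite [leLHS]/Num.Def.normr /= mx_normrE.
by apply: bigmax_le => // -[i j] _; exact: H.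
Qed.

Section Net.
Variables (R : realType) (n : nat) (E : rel 'I_n) (w : 'M[R]_n) (alpha : 'I_n -> R).
Hypothesis H : contractor_network E w alpha.

Let M := Amx alpha *m w.

Lemma ME i j : M i j = alpha i * w i j.
Proof. by rewrite /M /Amx mul_diag_mx mxE mxE. Qed.

Lemma alpha_ge0 i : 0 <= alpha i.
Proof.
case: H => _ [_ [_ [_ [Hp [Ho Hi]]]]].
case P: (pure_principal E i); first by rewrite Hp.
case O: (pure_obligee E i); first by rewrite Ho.
have Hii : intermediary E i by rewrite /intermediary P O.
by have /andP[/ltW ->] := Hi i Hii.
Qed.

Lemma alpha_le1 i : alpha i <= 1.
Proof.
case: H => _ [_ [_ [_ [Hp [Ho Hi]]]]].
case P: (pure_principal E i); first by rewrite Hp.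
case O: (pure_obligee E i); first by rewrite Ho.
have Hii : intermediary E i by rewrite /intermediary P O.
by have /andP[_ /ltW ->] := Hi i Hii.
Qed.

Lemma w_ge0 i j : 0 <= w i j.
Proof.
case: H => _ [Hpos [Hz _]].
case e: (E j i); first by apply/ltW/Hpos.
by rewrite Hz ?e.
Qed.

Lemma M_ge0 i j : 0 <= M i j.
Proof. by rewrite ME mulr_ge0 ?alpha_ge0 ?w_ge0. Qed.

Lemma wsum i : \sum_j w i j = if in_nbrs E i != finset.set0 then 1 else 0.
Proof.
case: H => _ [_ [Hz [Hs _]]].
rewrite (bigID (fun j => j \in in_nbrs E i)) /=.
rewrite [X in _ + X]big1 ?addr0; last first.
  by move=> j; rewrite /in_nbrs inE => /Hz.
case: ifP => [/Hs //|/negbFE/eqP ->].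
by rewrite big_pred0 // => j; rewrite inE.
Qed.

Lemma wsum_le1 i : \sum_j w i j <= 1.
Proof. by rewrite wsum; case: ifP. Qed.

Definition rs N i := \sum_j (M ^+ N) i j.

Lemma rs_mul (A B : 'M[R]_n) i : \sum_j (A *m B) i j = \sum_k A i k * \sum_j B k j.
Proof.
rewrite (eq_bigr (fun j => \sum_k A i k * B k j)); last by move=> j _; rewrite mxE.
rewrite exchange_big /=; apply: eq_bigr => k _; by rewrite mulr_sumr.
Qed.


Lemma Mpow_ge0 N i j : 0 <= (M ^+ N) i j.
Proof.
elim: N i j => [|N IH] i j.
  by rewrite expr0 !mxE; case: (i == j).
rewrite exprS -mulmxE mxE; apply: sumr_ge0 => k _.
by rewrite mulr_ge0 ?M_ge0 ?IH.
Qed.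

Lemma rs_ge0 N i : 0 <= rs N i.
Proof. by apply: sumr_ge0 => j _; exact: Mpow_ge0. Qed.

Lemma rsS N i : rs N.+1 i = \sum_k M i k * rs N k.
Proof. by rewrite /rs exprS -mulmxE rs_mul. Qed.

Lemma rs1E i : rs 1 i = alpha i * \sum_j w i j.
Proof. by rewrite /rs expr1 mulr_sumr; apply: eq_bigr => j _; rewrite ME. Qed.

Lemma rs1_le1 i : rs 1 i <= 1.
Proof.
rewrite rs1E; apply: (@le_trans _ _ (alpha i * 1)).
  by rewrite ler_wpM2l ?alpha_ge0 ?wsum_le1.
by rewrite mulr1 alpha_le1.
Qed.

Lemma rs_le1 N i : rs N i <= 1.
Proof.
elim: N i => [|N IH] i.
  rewrite /rs expr0 (bigD1 i) //= big1 ?addr0 ?mxE ?eqxx //.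
  by move=> j /negbTE ji; rewrite mxE eq_sym ji.
rewrite rsS; apply: (@le_trans _ _ (rs 1 i)); last exact: rs1_le1.
rewrite rs1E mulr_sumr; apply: ler_sum => k _; rewrite -ME.
by rewrite -[leRHS]mulr1 ler_wpM2l ?M_ge0 ?IH.
Qed.

Lemma rs1_lt1 k : ~~ pure_obligee E k -> rs 1 k < 1.
Proof.
move=> nO; have al : alpha k < 1.
  case: H => _ [_ [_ [_ [Hp [Ho Hi]]]]].
  case P: (pure_principal E k); first by rewrite Hp.
  have Hii : intermediary E k by rewrite /intermediary P nO.
  by have /andP[_ ->] := Hi k Hii.
rewrite rs1E; apply: (@le_lt_trans _ _ (alpha k * 1)); last by rewrite mulr1.
by rewrite ler_wpM2l ?alpha_ge0 ?wsum_le1.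
Qed.

Lemma rs2_lt1 i : rs 2 i < 1.
Proof.
rewrite rsS.
case O: (pure_obligee E i); last first.
  apply: (@le_lt_trans _ _ (rs 1 i)); last exact: rs1_lt1 (negbT O).
  rewrite rs1E mulr_sumr; apply: ler_sum => k _; rewrite -ME.
  by rewrite -[leRHS]mulr1 ler_wpM2l ?M_ge0 ?rs1_le1.
case: (H) => Hinc [Hpos [_ [_ [_ [Ho _]]]]].
have [k0 Ek0] : exists k0, E k0 i.
  have [k /orP[Eik|Eki]] := Hinc i; last by exists k.
  by move: O; rewrite /pure_obligee => /eqP/setP/(_ k); rewrite !inE Eik.
have nOk0 : ~~ pure_obligee E k0.
  by rewrite /pure_obligee; apply/set0Pn; exists i; rewrite inE.
have ai : alpha i = 1 by apply: Ho; rewrite O.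
have Mpos : 0 < M i k0 by rewrite ME ai mul1r Hpos.
have rs1i : rs 1 i = 1.
  rewrite rs1E ai mul1r wsum ifT //; apply/set0Pn; exists k0; by rewrite inE.
rewrite -rs1i rs1E mulr_sumr (bigD1 k0) //= [X in _ < X](bigD1 k0) //=.
apply: ltr_leD.
  by rewrite -ME -[ltRHS]mulr1 ltr_pM2l // rs1_lt1.
apply: ler_sum => k _; rewrite -ME.
by rewrite -[leRHS]mulr1 ler_wpM2l ?M_ge0 ?rs1_le1.
Qed.

Definition cc := \big[Num.max/0]_i rs 2 i.

Lemma cc_ge0 : 0 <= cc.
Proof. by apply/bigmax_geP; left. Qed.

Lemma rs2_le_cc i : rs 2 i <= cc.
Proof. by apply/bigmax_geP; right; exists i. Qed.

Lemma cc_lt1 : cc < 1.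
Proof. by apply/bigmax_ltP; split => // i _; exact: rs2_lt1. Qed.

Lemma rs_bound N i : rs N i <= cc ^+ N./2.
Proof.
elim/ltn_ind: N i => -[|[|N]] IH i.
- by rewrite expr0 rs_le1.
- by rewrite expr0 rs_le1.
have -> : rs N.+2 i = \sum_k (M ^+ 2) i k * rs N k.
  by rewrite /rs -addn2 addnC exprD -mulmxE rs_mul.
have -> : N.+2./2 = (N./2).+1 by [].
rewrite [cc ^+ _.+1]exprSr.
apply: (@le_trans _ _ (\sum_k (M ^+ 2) i k * cc ^+ N./2)).
  apply: ler_sum => k _; rewrite ler_wpM2l ?Mpow_ge0 //.
  by apply: IH; rewrite ltnS leqnSn.
rewrite -mulr_suml [leRHS]mulrC ler_wpM2r ?exprn_ge0 ?cc_ge0 //; exact: rs2_le_cc.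
Qed.

Lemma Mpow_bound N i j : (M ^+ N) i j <= cc ^+ N./2.
Proof.
apply: le_trans (rs_bound N i); rewrite /rs (bigD1 j) //= lerDl.
by apply: sumr_ge0 => k _; exact: Mpow_ge0.
Qed.

Lemma M2_rs i : \sum_k (M *m M) i k = rs 2 i.
Proof. by rewrite /rs expr2 mulmxE. Qed.

Lemma unit_IM : (1%:M - M) \in unitmx.
Proof.
rewrite unitmxE unitfE -det_tr; apply/negP => /det0P[v v0 vA].
have vM : v *m M^T = v.
  have e : v *m (1%:M - M)^T = v - v *m M^T.
    by rewrite linearB /= trmx1 mulmxBr mulmx1.
  by apply/eqP; rewrite eq_sym -subr_eq0 -e vA.
have vM2 : v *m (M *m M)^T = v by rewrite trmx_mul mulmxA vM vM.
have Hle : `|v| <= cc * `|v|.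
  apply: norm_le_entries; first by rewrite mulr_ge0 ?cc_ge0.
  move=> i j; rewrite -{1}vM2 mxE.
  apply: (@le_trans _ _ (\sum_k `|v| * (M *m M) j k)).
    apply: (le_trans (ler_norm_sum _ _ _)); apply: ler_sum => k _.
    rewrite mxE normrM (@ger0_norm _ ((M *m M) j k)); last first.
      by have := Mpow_ge0 2 j k; rewrite expr2 mulmxE.
    rewrite ler_wpM2r ?entry_le_norm //.
    by have := Mpow_ge0 2 j k; rewrite expr2 mulmxE.
  rewrite -mulr_sumr M2_rs mulrC ler_wpM2r //; exact: rs2_le_cc.
have h : `|v| = 0.
  apply/eqP; rewrite eq_le normr_ge0 andbT; rewrite leNgt; apply/negP => vp.
  have : cc * `|v| < `|v| by rewrite gtr_pMl // cc_lt1.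
  by rewrite ltNge Hle.
by move: v0; rewrite -normr_eq0 h eqxx.
Qed.

Lemma one_mx : (1%:M : 'M[R]_n) = 1.
Proof. by []. Qed.

Lemma tele N : (1%:M - M) *m (\sum_(0 <= k < N) M ^+ k) = 1%:M - M ^+ N.
Proof.
rewrite one_mx mulmxE; elim: N => [|N IH].
  by rewrite big_geq // mulr0 expr0 subrr.
rewrite big_nat_recr //= mulrDr IH mulrBl mul1r -exprS.
by rewrite addrA subrK.
Qed.

Lemma cvg_series : series (fun t => M ^+ t) @ \oo --> invmx (1%:M - M).
Proof.
set X := invmx (1%:M - M).
have SE N : series (fun t => M ^+ t) N = X - X *m M ^+ N.
  rewrite /series /= -[LHS]mul1mx -(mulVmx unit_IM) -mulmxA tele.
  by rewrite mulmxBr mulmx1.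
apply/cvgrPdist_le => eps eps0.
set K := n%:R * `|X| + 1.
have K0 : 0 < K.
  by apply: (lt_le_trans ltr01); rewrite lerDr mulr_ge0 ?normr_ge0 ?ler0n.
have : `|cc| < 1 by rewrite ger0_norm ?cc_ge0 ?cc_lt1.
move=> /cvg_expr /cvgrPdist_le /(_ (eps / K)) [].
  by rewrite divr_gt0.
move=> k0 _ Hk0.
exists k0.*2 => // N /= HN.
have hk : (k0 <= N./2)%N by rewrite -[k0]doubleK half_leq.
have Hc : cc ^+ N./2 <= eps / K.
  by have := Hk0 _ hk; rewrite /= sub0r normrN ger0_norm ?exprn_ge0 ?cc_ge0.
rewrite SE opprB addrC subrK.
apply: norm_le_entries; first exact: ltW.
move=> i j; rewrite mxE.
apply: (le_trans (ler_norm_sum _ _ _)).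
apply: (@le_trans _ _ (\sum_(k < n) `|X| * cc ^+ N./2)).
  apply: ler_sum => k _; rewrite normrM (ger0_norm (Mpow_ge0 _ _ _)).
  by apply: ler_pM; rewrite ?normr_ge0 ?Mpow_ge0 ?entry_le_norm ?Mpow_bound.
rewrite sumr_const card_ord -mulr_natl mulrA.
apply: (@le_trans _ _ (K * cc ^+ N./2)).
  by rewrite ler_wpM2r ?exprn_ge0 ?cc_ge0 // lerDl.
by rewrite mulrC -ler_pdivlMr.
Qed.

End Net.

Theorem mainTheorem3 (R : realType) (n : nat) (E : rel 'I_n)
    (w : 'M[R]_n) (alpha : 'I_n -> R) :
  contractor_network E w alpha ->
  (1%:M - Amx alpha *m w) \in unitmx /\
  (series (fun t : nat => (Amx alpha *m w) ^+ t) @ \oo -->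
     invmx (1%:M - Amx alpha *m w)).
Proof.
move=> H; split; [exact: unit_IM H | exact: cvg_series H].
Qed.
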